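(* Let $G$ be a finite simple graph with $|G|$ vertices and let $s$ be a positive integer. Then \[ \sum_{i=1}^{|G|} \lambda_i(G)^{2s} \le \sum_{v \in V(G)} \lambda_1\bigl(B_G(v,s)\bigr)^{2s}. \]
   Context: For a graph $F$, $\lambda_1(F) \ge \lambda_2(F) \ge \cdots$ denote the eigenvalues of the adjacency matrix of $F$, listed with multiplicity. For a vertex $v$ of $G$ and integer $s \ge 0$, $B_G(v,s)$ denotes the subgraph of $G$ induced by all vertices within graph distance at most $s$ of $v$. *)

(* Defs.v *)
From HB Require Import structures.
From mathcomp Require Import all_boot all_order all_algebra.
Set Implicit Arguments. Unset Strict Implicit. Unset Printing Implicit Defensive.
Import Order.TTheory GRing.Theory Num.Theory.
Local Open Scope ring_scope.

Definition simple_graph (n : nat) (e : rel 'I_n) : Prop :=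
  (forall u v, e u v = e v u) /\ (forall v, ~~ e v v).

Definition induced_adj (R : nzRingType) (n : nat) (e : rel 'I_n)
  (S : {set 'I_n}) : 'M[R]_#|S| :=
  \matrix_(i < #|S|, j < #|S|) (e (enum_val i) (enum_val j))%:R.

Definition adj_mx (R : nzRingType) (n : nat) (e : rel 'I_n) : 'M[R]_n :=
  \matrix_(i < n, j < n) (e i j)%:R.

(* B_G(v,k): vertex set of all vertices at graph distance <= k from v. *)
Fixpoint ball (n : nat) (e : rel 'I_n) (v : 'I_n) (k : nat) : {set 'I_n} :=
  match k with
  | 0 => [set v]
  | k'.+1 => ball e v k' :|: [set w | [exists u in ball e v k', e u w]]
  end.

(* s is the list of eigenvalues of A, with multiplicity, in nonincreasing
   order: lambda_1 = s`_0 >= lambda_2 = s`_1 >= ... *)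
Definition is_spectrum (R : rcfType) (m : nat) (A : 'M[R]_m) (s : seq R) : Prop :=
  sorted (fun x y : R => y <= x) s /\
  char_poly A = \prod_(x <- s) ('X - x%:P).

(* Main.v *)
Require Import Defs.
From HB Require Import structures.
From mathcomp Require Import all_boot all_order all_algebra.
From mathcomp Require Import sesquilinear spectral.
From mathcomp Require Import complex zify.
Import Order.TTheory GRing.Theory Num.Theory.
Local Open Scope ring_scope.
Local Open Scope sesquilinear_scope.
Set Implicit Arguments. Unset Strict Implicit. Unset Printing Implicit Defensive.

Definition mxpow (T : nzRingType) m (M : 'M[T]_m) k := iter k (mulmx M) 1%:M.

Lemma mxpowS (T : nzRingType) m (M : 'M[T]_m) k : mxpow M k.+1 = M *m mxpow M k.
Proof. by []. Qed.

Lemma mxpowSr (T : nzRingType) m (M : 'M[T]_m) k : mxpow M k.+1 = mxpow M k *m M.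
Proof.
elim: k => [|k IH]; first by rewrite /mxpow /= mulmx1 mul1mx.
by rewrite mxpowS {1}IH mulmxA -mxpowS.
Qed.

Lemma ball_sub n (e : rel 'I_n) v a b : (a <= b)%N -> ball e v a \subset ball e v b.
Proof.
elim: b => [|b IH]; first by rewrite leqn0 => /eqP ->.
rewrite leq_eqVlt => /orP [/eqP -> //| ]; rewrite ltnS => /IH H.
apply: (subset_trans H); exact: subsetUl.
Qed.
Lemma ball_step n (e : rel 'I_n) v a x y : x \in ball e v a -> e x y -> y \in ball e v a.+1.
Proof.
move=> Hx Hxy; rewrite /= in_setU; apply/orP; right; rewrite inE.
by apply/existsP; exists x; rewrite Hx.
Qed.

Lemma walk_eq (T : nzRingType) n (e : rel 'I_n) (sym : forall u w, e u w = e w u) v s :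
  forall k a b (i j : 'I_#|ball e v s|), (a <= s)%N -> (b <= s)%N -> (a + b + k <= 2 * s)%N ->
  enum_val i \in ball e v a -> enum_val j \in ball e v b ->
  mxpow (adj_mx T e) k (enum_val i) (enum_val j) = mxpow (induced_adj T e (ball e v s)) k i j.
Proof.
set S := ball e v s.
elim=> [|k IH] a b i j ha hb hk hi hj.
  by rewrite /mxpow /= !mxE (inj_eq enum_val_inj).
have [ltas|leas] := ltnP a s.
  rewrite !mxpowS !mxE (bigID (fun z => z \in S)) /= [X in _ + X]big1; last first.
    move=> z zS; rewrite mxE.
    case ez: (e _ z); last by rewrite mul0r.
    have := ball_step hi ez => zb.
    by move: zS; rewrite (subsetP (ball_sub e v ltas) _ zb).
  rewrite addr0 big_enum_val /=.
  apply: eq_bigr => l _; rewrite !mxE.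
  case ez: (e _ _); last by rewrite !mul0r.
  congr (_ * _); apply: (IH a.+1 b) => //; first by move: hk; rewrite !addnS !addSn.
  exact: ball_step hi ez.
have ltbs : (b < s)%N by move: hk; rewrite addnS; lia.
rewrite !mxpowSr !mxE (bigID (fun z => z \in S)) /= [X in _ + X]big1; last first.
  move=> z zS; rewrite mxE.
  case ez: (e z _); last by rewrite mulr0.
  rewrite sym in ez.
  have := ball_step hj ez => zb.
  by move: zS; rewrite (subsetP (ball_sub e v ltbs) _ zb).
rewrite addr0 big_enum_val /=.
apply: eq_bigr => l _; rewrite !mxE.
case ez: (e _ (enum_val j)); last by rewrite !mulr0.
congr (_ * _); apply: (IH a b.+1) => //; first by move: hk; rewrite !addnS.
by apply: ball_step hj _; rewrite sym.
Qed.

Lemma char_poly_conj (F : fieldType) m (Q P A : 'M[F]_m) : Q *m P = 1%:M ->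
  char_poly (Q *m A *m P) = char_poly A.
Proof.
move=> QP; rewrite /char_poly /char_poly_mx !map_mxM.
set Qp := map_mx _ Q; set Pp := map_mx _ P; set Ap := map_mx _ A.
have QPp : Qp *m Pp = 1%:M by rewrite -map_mxM QP map_mx1.
have -> : 'X%:M - Qp *m Ap *m Pp = Qp *m ('X%:M - Ap) *m Pp.
  rewrite mulmxBr mulmxBl; congr (_ - _).
  by rewrite -mulmxA -(scalar_mxC _ Pp) mulmxA QPp mul1mx.
rewrite !det_mulmx mulrC mulrA -det_mulmx (mulmx1C QPp) det1 mul1r //.
Qed.

Section Spec.
Variables (C : numClosedFieldType) (m : nat) (M : 'M[C]_m).
Hypothesis hM : M^t* = M.
Let P := spectralmx M.
Let d := spectral_diag M.

Lemma M_normal : M \is normalmx.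
Proof. by apply/normalmxP; rewrite hM. Qed.

Lemma M_dec : M = P^t* *m diag_mx d *m P.
Proof.
rewrite -invmx_unitary; last exact: spectral_unitarymx.
exact/orthomx_spectralP/M_normal.
Qed.

Lemma PPt : P *m P^t* = 1%:M.
Proof. exact/unitarymxP/spectral_unitarymx. Qed.

Lemma PtP : P^t* *m P = 1%:M.
Proof. exact: mulmx1C PPt. Qed.

Lemma pow_dec k : mxpow M k = P^t* *m diag_mx (\row_j (d 0 j) ^+ k) *m P.
Proof.
elim: k => [|k IH].
  have -> : diag_mx (\row_j (d 0 j) ^+ 0) = 1%:M.
    by apply/matrixP => i j; rewrite !mxE expr0.
  by rewrite mulmx1 PtP.
rewrite mxpowS IH {1}M_dec !mulmxA.
rewrite -[P^t* *m _ *m P *m P^t*]mulmxA PPt mulmx1.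
congr (_ *m _); rewrite -!mulmxA; congr (_ *m _).
apply/matrixP => i j; rewrite mul_diag_mx !mxE.
by case: (i == j); rewrite ?mulr0n ?mulr0 // !mulr1n exprS.
Qed.

Lemma tr_pow k : \tr (mxpow M k) = \sum_j (d 0 j) ^+ k.
Proof.
rewrite pow_dec mxtrace_mulC mulmxA PPt mul1mx mxtrace_diag.
by apply: eq_bigr => j _; rewrite mxE.
Qed.

Lemma charM : char_poly M = \prod_(j < m) ('X - (d 0 j)%:P).
Proof.
rewrite {1}M_dec char_poly_conj ?PtP // char_poly_trig ?diag_mx_is_trig //.
by apply: eq_bigr => j _; rewrite mxE eqxx mulr1n.
Qed.

Lemma perm_d (sp : seq C) : char_poly M = \prod_(x <- sp) ('X - x%:P) ->
  perm_eq [seq d 0 j | j <- index_enum 'I_m] sp.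
Proof.
move=> h; apply: prod_XsubC_eq; rewrite -h charM big_map //.
Qed.

Lemma quad_form (x : 'rV[C]_m) k :
  (x *m mxpow M k *m x^t*) 0 0 = \sum_j (d 0 j) ^+ k * `|(x *m P^t*) 0 j| ^+ 2.
Proof.
rewrite pow_dec !mulmxA.
have -> : x *m P^t* *m diag_mx (\row_j d 0 j ^+ k) *m P *m x^t* =
   (x *m P^t*) *m diag_mx (\row_j d 0 j ^+ k) *m (x *m P^t*)^t*.
  by rewrite -!mulmxA; congr (_ *m (_ *m (_ *m _))); rewrite trmx_mul map_mxM trmxCK.
rewrite mxE; apply: eq_bigr => j _.
by rewrite mul_mx_diag !mxE normCK -mulrA mulrCA.
Qed.


Lemma quad_expand (z : 'rV[C]_m) (N : 'M[C]_m) :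
  (z *m N *m z^t*) 0 0 = \sum_b \sum_a z 0 a * N a b * (z 0 b)^*.
Proof.
rewrite mxE; apply: eq_bigr => b _; rewrite !mxE mulr_suml.
by apply: eq_bigr => a _; rewrite ?mxE.
Qed.

Lemma norm_sum (z : 'rV[C]_m) : \sum_j `|(z *m P^t*) 0 j| ^+ 2 = (z *m z^t*) 0 0.
Proof.
have := quad_form z 0; rewrite /mxpow /= mulmx1 => ->.
by apply: eq_bigr => j _; rewrite expr0 mul1r.
Qed.

Lemma dot_self (z : 'rV[C]_m) : (z *m z^t*) 0 0 = \sum_a `|z 0 a| ^+ 2.
Proof. by rewrite mxE; apply: eq_bigr => a _; rewrite ?mxE normCK. Qed.

Lemma sum_delta (F : 'I_m -> C) j :
  \sum_i F i * `|(row j (1%:M : 'M[C]_m)) 0 i| ^+ 2 = F j.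
Proof.
rewrite (bigD1 j) //= big1 ?addr0 => [|i ij]; first by rewrite !mxE eqxx normr1 expr1n mulr1.
by rewrite !mxE eq_sym (negbTE ij) /= normr0 expr0n mulr0.
Qed.

Hypothesis Mge0 : forall a b, 0 <= M a b.
Variable mu : C.
Hypothesis dle : forall j, d 0 j <= mu.
Hypothesis dreal : forall j, d 0 j \is Num.real.

Lemma rayleigh_le (z : 'rV[C]_m) : (z *m M *m z^t*) 0 0 <= mu * (z *m z^t*) 0 0.
Proof.
have := quad_form z 1; rewrite /mxpow /= mulmx1 => ->.
rewrite -norm_sum mulr_sumr; apply: ler_sum => j _; rewrite expr1.
by apply: ler_wpM2r; [rewrite exprn_ge0 ?normr_ge0 | exact: dle].
Qed.

Lemma abs_d j : `|d 0 j| <= mu.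
Proof.
pose x := row j P.
have hw : x *m P^t* = row j 1%:M by rewrite /x -row_mul PPt.
have h1 : (x *m M *m x^t*) 0 0 = d 0 j.
  have := quad_form x 1; rewrite /mxpow /= mulmx1 => ->.
  by rewrite hw (sum_delta (fun i => d 0 i ^+ 1)) expr1.
have hx1 : (x *m x^t*) 0 0 = 1.
  by rewrite -norm_sum hw -[RHS](sum_delta (fun=> 1) j); apply: eq_bigr => i _; rewrite mul1r.
pose y := \row_a (`|x 0 a| : C).
have E : (y *m M *m y^t*) 0 0 = \sum_b \sum_a `|x 0 a| * M a b * `|x 0 b|.
  rewrite quad_expand; apply: eq_bigr => b _; apply: eq_bigr => a _.
  by rewrite !mxE geC0_conj ?normr_ge0.
have Ey : (y *m y^t*) 0 0 = (x *m x^t*) 0 0.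
  by rewrite !dot_self; apply: eq_bigr => a _; rewrite mxE normr_id.
rewrite -h1 quad_expand.
apply: (le_trans (ler_norm_sum _ _ _)).
apply: (@le_trans _ _ (\sum_b \sum_a `|x 0 a| * M a b * `|x 0 b|)).
  apply: ler_sum => b _; apply: (le_trans (ler_norm_sum _ _ _)).
  apply: ler_sum => a _.
  by rewrite !normrM norm_conjC (ger0_norm (Mge0 a b)).
by rewrite -E; apply: le_trans (rayleigh_le y) _; rewrite Ey hx1 mulr1.
Qed.

Lemma pow_bound k (v : 'I_m) : (mxpow M (2 * k)) v v <= mu ^+ (2 * k).
Proof.
pose e := (delta_mx 0 v : 'rV[C]_m).
have hv : (e *m mxpow M (2 * k) *m e^t*) 0 0 = mxpow M (2 * k) v v.
  rewrite -rowE mxE (bigD1 v) //= big1 ?addr0 => [|b bv].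
    by rewrite !mxE !eqxx /= conjC1 mulr1.
  by rewrite !mxE (negbTE bv) andbF /= conjC0 mulr0.
have he : (e *m e^t*) 0 0 = 1.
  rewrite dot_self (bigD1 v) //= big1 ?addr0 => [|b bv].
    by rewrite !mxE !eqxx normr1 expr1n.
  by rewrite !mxE (negbTE bv) andbF normr0 expr0n.
have mu0 : 0 <= mu by apply: le_trans (normr_ge0 _) (abs_d v).
rewrite -hv quad_form -[X in _ <= X]mulr1 -he -norm_sum mulr_sumr.
apply: ler_sum => j _; apply: ler_wpM2r; first by rewrite exprn_ge0 ?normr_ge0.
rewrite exprM -real_normK ?dreal // -exprM.
apply: lerXn2r; rewrite ?nnegrE ?normr_ge0 //; exact: abs_d.
Qed.

End Spec.

Section Main.
Variable R : rcfType.
Local Notation C := (complex R).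
Local Notation toC := (real_complex R).

Lemma charC m (MR : 'M[R]_m) (sp : seq R) :
  char_poly MR = \prod_(x <- sp) ('X - x%:P) ->
  char_poly (map_mx toC MR) = \prod_(x <- map toC sp) ('X - x%:P).
Proof. by move=> h; rewrite -map_char_poly h map_prod_XsubC big_map. Qed.

Lemma size_spec m (MR : 'M[R]_m) (sp : seq R) :
  char_poly MR = \prod_(x <- sp) ('X - x%:P) -> size sp = m.
Proof.
move=> h; have := size_char_poly MR; rewrite h size_prod_XsubC.
by case.
Qed.

Lemma sorted_head (sp : seq R) x : sorted (fun x y : R => y <= x) sp -> x \in sp -> x <= sp`_0.
Proof.
case: sp => [//|y sp] /= hs; rewrite inE => /orP [/eqP -> //|xs].
have tr : transitive (fun x y : R => y <= x).
  by move=> a b c hab hbc; apply: le_trans hbc hab.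
by have /allP H := order_path_min tr hs; apply: H.
Qed.

End Main.

Unset Implicit Arguments.
Set Strict Implicit.

Theorem lemma7 (R : rcfType) (n : nat) (e : rel 'I_n) (s : nat)
  (hG : simple_graph e) (hs : (0 < s)%N)
  (specG : seq R) (hspecG : is_spectrum (adj_mx R e) specG)
  (specB : 'I_n -> seq R)
  (hspecB : forall v, is_spectrum (induced_adj R e (ball e v s)) (specB v)) :
  \sum_(i < n) specG`_i ^+ (2 * s) <= \sum_(v < n) (specB v)`_0 ^+ (2 * s).
Proof.
move: hspecG => [_ hcG].
have sym : forall u w, e u w = e w u by case: hG.
pose A := adj_mx (complex R) e.
have hA : map_mx (real_complex R) (adj_mx R e) = A.
  by apply/matrixP => i j; rewrite !mxE rmorph_nat.
have At : A^t* = A by apply/matrixP => i j; rewrite !mxE conjC_nat sym.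
have cA := charC hcG; rewrite hA in cA.
have pA := perm_d At cA.
have sz := size_spec hcG.
rewrite -lecR !rmorph_sum.
have -> : \sum_(i < n) real_complex R (specG`_i ^+ (2 * s)) =
          \sum_v mxpow A (2 * s) v v.
  transitivity (\sum_(x <- map (real_complex R) specG) x ^+ (2 * s)).
    rewrite big_map (big_nth 0) sz big_mkord; apply: eq_bigr => i _.
    by rewrite rmorphXn.
  by rewrite -(perm_big _ pA) big_map -(tr_pow At).
apply: ler_sum => v _; rewrite rmorphXn.
set S := ball e v s.
have vS : v \in S by apply: (subsetP (ball_sub e v (leq0n s))); rewrite /= inE.
pose i0 := enum_rank_in vS v.
have hi0 : enum_val i0 = v := enum_rankK_in vS vS.
pose B := induced_adj (complex R) e S.
have hB : map_mx (real_complex R) (induced_adj R e S) = B.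
  by apply/matrixP => i j; rewrite !mxE rmorph_nat.
have Bt : B^t* = B by apply/matrixP => i j; rewrite !mxE conjC_nat sym.
have [hsB hcB] := hspecB v.
have cB := charC hcB; rewrite hB in cB.
have pB := perm_d Bt cB.
have -> : mxpow A (2 * s) v v = mxpow B (2 * s) i0 i0.
  rewrite -{1 2}hi0; apply: (@walk_eq _ _ e sym v s (2 * s) 0 0) => //; by rewrite hi0 /= inE.
have dmem j : exists2 x, x \in specB v & spectral_diag B 0 j = real_complex R x.
  have : spectral_diag B 0 j \in map (real_complex R) (specB v).
    by rewrite -(perm_mem pB); apply: map_f; exact: mem_index_enum.
  by case/mapP => x xin ->; exists x.
have Mge0 : forall a b, 0 <= B a b by move=> a b; rewrite mxE ler0n.
have dle : forall j, spectral_diag B 0 j <= real_complex R (specB v)`_0.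
  by move=> j; have [x xin ->] := dmem j; rewrite lecR; exact: sorted_head hsB xin.
have dreal : forall j, spectral_diag B 0 j \is Num.real.
  by move=> j; have [x xin ->] := dmem j; rewrite complex_real.
exact: (pow_bound Bt Mge0 dle dreal s i0).
Qed.
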